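(* Let $H$ be the graph consisting of three vertex-disjoint copies of $K_{4,4}$. Then the complement $\overline{H}$ is not a $2$-AND-PCG.
   Context: All trees are unrooted with edges weighted by nonnegative reals; $d_T(u,v)$ is the weight of the path between leaves $u,v$ of $T$. A graph $G$ is a PCG if there exist a tree $T$ with leaf set $V(G)$ and an interval $I$ of nonnegative reals such that $\{u,v\}\in E(G)$ iff $d_T(u,v)\in I$. A graph $G=(V,E)$ is a $k$-AND-PCG if there exist $k$ PCGs $G_1,\ldots,G_k$ on vertex set $V$ with $E=\bigcap_i E(G_i)$. *)

(* Defs.v *)
From HB Require Import structures.
From mathcomp Require Import all_boot all_order all_algebra.
From mathcomp Require Import reals.
Set Implicit Arguments. Unset Strict Implicit. Unset Printing Implicit Defensive.
Import Order.TTheory GRing.Theory Num.Theory.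
Local Open Scope ring_scope.

Definition is_tree (N : finType) (e : rel N) : Prop :=
  symmetric e /\ irreflexive e /\
  (forall x y : N, connect e x y) /\
  (forall (x : N) (p : seq N),
      path e x p -> uniq (x :: p) -> (2 <= size p)%N -> ~~ e (last x p) x).

Definition is_leaf (N : finType) (e : rel N) (x : N) : bool :=
  #|[set y | e x y]| == 1%N.

Definition walk_weight (R : realType) (N : finType) (w : N -> N -> R)
  (x : N) (p : seq N) : R := \sum_(c <- pairmap w x p) c.

Definition nonneg_interval (R : realType) (I : R -> Prop) : Prop :=
  (forall x, I x -> 0 <= x) /\
  (forall a b x, I a -> I b -> a <= x -> x <= b -> I x).

(* G = (V, E) is a pairwise compatibility graph: there is an edge-weighted
   tree (N, e, w) whose leaf set is (identified via the bijection [f] with) V,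
   and an interval I with {u,v} in E iff d_T(f u, f v) in I.  d_T(a,b) is the
   weight of the (unique) simple path from a to b in the tree. *)
Definition is_PCG (R : realType) (V : finType) (E : rel V) : Prop :=
  exists (N : finType) (e : rel N) (w : N -> N -> R) (f : V -> N) (I : R -> Prop),
    is_tree e /\
    (forall x y, e x y -> 0 <= w x y /\ w x y = w y x) /\
    injective f /\
    (forall x, is_leaf e x <-> exists v, f v = x) /\
    nonneg_interval I /\
    (forall u v : V,
            E u v <->
            (u != v /\
             exists p : seq N,
               [/\ path e (f u) p, uniq (f u :: p), last (f u) p = f v &
                   I (walk_weight w (f u) p)])).

Definition is_k_AND_PCG (R : realType) (k : nat) (V : finType) (E : rel V) : Prop :=
  exists Es : 'I_k -> rel V,
    (forall i, is_PCG R (Es i)) /\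
    (forall u v, E u v <-> (forall i, Es i u v)).

Definition compl_graph (V : finType) (E : rel V) : rel V :=
  fun u v => (u != v) && ~~ E u v.

(* H = three vertex-disjoint copies of K_{4,4}.  A vertex is
   (copy, (side, index)) with copy : 'I_3, side : 'I_2, index : 'I_4. *)
Definition HV : finType := ('I_3 * ('I_2 * 'I_4))%type.
Definition H_edge : rel HV :=
  fun x y => (x.1 == y.1) && (x.2.1 != y.2.1).

(* Main.v *)
Require Import Defs.
From HB Require Import structures.
From mathcomp Require Import all_boot all_order all_algebra.
From mathcomp Require Import reals.
From mathcomp Require Import lra.
From Stdlib Require Import Classical.
Set Implicit Arguments. Unset Strict Implicit. Unset Printing Implicit Defensive.
Import Order.TTheory GRing.Theory Num.Theory.
Local Open Scope ring_scope.


Lemma pairmap_rcons (T U : Type) (f : T -> T -> U) x s y :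
  pairmap f x (rcons s y) = rcons (pairmap f x s) (f (last x s) y).
Proof. by elim: s x => //= z s IH x; rewrite IH. Qed.

Section Tree.
Variables (R : realType) (N : finType) (e : rel N) (w : N -> N -> R).
Hypothesis esym : symmetric e.
Hypothesis eirr : irreflexive e.
Hypothesis econn : forall x y, connect e x y.
Hypothesis eacyc : forall (x : N) (p : seq N),
      path e x p -> uniq (x :: p) -> (2 <= size p)%N -> ~~ e (last x p) x.
Hypothesis wpos : forall x y, e x y -> 0 <= w x y /\ w x y = w y x.

Definition erm (s t : N) : rel N := fun x y =>
  e x y && ~~ (((x == s) && (y == t)) || ((x == t) && (y == s))).

Lemma erm_sym s t : symmetric (erm s t).
Proof.
move=> x y; rewrite /erm esym; congr (_ && ~~ _).
by case: (x == s); case: (y == t); case: (x == t); case: (y == s).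
Qed.

Lemma erm_swap s t : erm s t =2 erm t s.
Proof.
move=> x y; rewrite /erm; congr (_ && ~~ _).
by case: (x == s); case: (y == t); case: (x == t); case: (y == s).
Qed.

Lemma erm_e s t x y : erm s t x y -> e x y.
Proof. by case/andP. Qed.

Lemma csym s t x y : connect (erm s t) x y = connect (erm s t) y x.
Proof. exact: (sym_connect_sym (@erm_sym s t)). Qed.

Lemma bridge s t : e s t -> ~~ connect (erm s t) s t.
Proof.
move=> est; apply/negP => /connectP [p pp lp].
case: (shortenP pp) lp => q qp qu _ lq.
have qe : path e s q.
  by apply: (sub_path _ qp) => a b; apply: erm_e.
case: q qp qu qe lq => [|y [|z q]].
- by move=> _ _ _ /= st; move: est; rewrite -st eirr.
- move=> /= /andP [hst _] _ _ /= yt; move: hst; rewrite /erm yt !eqxx /=.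
  by rewrite andbF.
move=> qp qu qe lq.
by have := eacyc qe qu; rewrite -lq esym est => /(_ isT).
Qed.

Lemma part s t x : e s t -> connect (erm s t) s x || connect (erm s t) t x.
Proof.
move=> est; have /connectP [p pp ->] := econn s x.
elim/last_ind: p pp => [|p z IH] /=; first by rewrite connect0.
rewrite rcons_path last_rcons => /andP [/IH H1 H2].
case ez : (erm s t (last s p) z).
  case/orP: H1 => H1; apply/orP; [left|right];
    by apply: connect_trans H1 (connect1 ez).
move: ez; rewrite /erm H2 /= => /negbFE /orP [] /andP [_ /eqP ->].
  by rewrite connect0 orbT.
by rewrite connect0.
Qed.

Lemma disj s t x : e s t -> connect (erm s t) s x -> connect (erm s t) t x -> False.
Proof.
move=> est H1 H2; have := bridge est; rewrite (connect_trans H1) //.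
by rewrite csym.
Qed.

Lemma side s t x : e s t -> connect (erm s t) s x = ~~ connect (erm s t) t x.
Proof.
move=> est; case H: (connect (erm s t) t x) => /=.
  by apply/negP => H'; apply: (disj est H' H).
by have := part x est; rewrite H orbF.
Qed.

Definition sig (st : N * N) x : bool := connect (erm st.1 st.2) st.2 x.

Definition D x y : R :=
  \sum_(st | e st.1 st.2) (if sig st x != sig st y then w st.1 st.2 else 0).

Lemma path_avoid x p z z' : path e x p -> z' \notin x :: p ->
  path (erm z z') x p.
Proof.
move=> pp nz; apply: (@sub_in_path _ (predC1 z') e) pp.
  move=> a b /= az bz eab; rewrite /erm eab /=.
  by rewrite (negbTE az) (negbTE bz) !andbF.
by apply/allP => y /= yin; apply/eqP => yz; move: nz; rewrite -yz yin.
Qed.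

Lemma conn_eq (r : rel N) u x t : symmetric r -> connect r u x ->
  connect r t x = connect r t u.
Proof.
move=> rs ux; apply/idP/idP => H; last exact: connect_trans H ux.
apply: connect_trans H _; by rewrite (sym_connect_sym rs).
Qed.

Lemma sum_ind (c : N * N) (k : R) : e c.1 c.2 ->
  \sum_(st | e st.1 st.2) (if st == c then k else 0) = k.
Proof.
move=> ec; rewrite (bigD1 c) //= eqxx big1 ?addr0 //.
by move=> st /andP [_ /negbTE ->].
Qed.

Lemma walk_D x p : path e x p -> uniq (x :: p) ->
  2 * walk_weight w x p = D x (last x p).
Proof.
elim/last_ind: p => [|p z' IH].
  move=> _ _; rewrite /walk_weight /D big_nil mulr0 big1 // => st _.
  by rewrite eqxx.
rewrite rcons_path -rcons_cons rcons_uniq last_rcons => /andP [pp ezz] /andP [nz u].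
have {}IH := IH pp u.
rewrite /walk_weight pairmap_rcons -cats1 big_cat big_seq1 /= mulrDr.
rewrite [X in X + _]IH.
set z := last x p in ezz *.
have zz : z != z' by apply: contraTneq ezz => ->; rewrite eirr.
have pa := path_avoid z pp nz.
have xz : connect (erm z z') x z by apply: (path_connect pa); apply: mem_last.
have xz2 : connect (erm z' z) x z by rewrite -(eq_connect (@erm_swap z z')).
have [w0 wsym] := wpos ezz.
have -> : D x z' = D x z + (\sum_(st | e st.1 st.2)
      (if st == (z, z') then w z z' else 0)) +
      (\sum_(st | e st.1 st.2) (if st == (z', z) then w z z' else 0)).
  rewrite /D -!big_split /=; apply: eq_bigr => [[s t]] /= est.
  case: (eqVneq (s, t) (z, z')) => [[-> ->]|H1].
    rewrite (negbTE (_ : (z, z') != (z', z))); last first.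
      by apply: contra zz => /eqP [->].
    rewrite /sig /= connect0.
    have -> : connect (erm z z') z' z = false.
      by apply/negbTE; rewrite csym; apply: bridge.
    have -> : connect (erm z z') z' x = false.
      apply/negbTE/negP => H; apply: (disj ezz _ H).
      by rewrite csym.
    by rewrite addr0 add0r.
  case: (eqVneq (s, t) (z', z)) => [[-> ->]|H2].
    rewrite /sig /= connect0.
    have -> : connect (erm z' z) z z' = false.
      by apply/negbTE; rewrite csym; apply: bridge; rewrite esym.
    have -> : connect (erm z' z) z x = true by rewrite csym.
    by rewrite /= addr0 add0r wsym.
  rewrite ?(negbTE H2) !addr0; congr (if _ then _ else _); congr (_ != _).
  rewrite /sig; apply: (@conn_eq _ z); first exact: erm_sym.
  apply: connect1; rewrite /erm ezz /=.
  apply/negP => /orP [] /andP [/eqP a /eqP b]; [move: H1 | move: H2]; by rewrite -a -b eqxx.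
rewrite !sum_ind //; last by rewrite /= esym.
lra.
Qed.


Lemma sig_swap s t x : e s t -> sig (t, s) x = ~~ sig (s, t) x.
Proof.
move=> est; rewrite /sig /= -(side _ est).
by apply: eq_connect => a b; rewrite erm_swap.
Qed.

Lemma avoidK s1 t1 s2 t2 u x : connect (erm s1 t1) u x ->
  (forall y, connect (erm s1 t1) u y -> (y != s2) && (y != t2)) ->
  connect (erm s2 t2) u x.
Proof.
move=> /connectP [p pp ->] Hy; apply/connectP; exists p => //.
apply: (@sub_in_path _ [pred y | (y != s2) && (y != t2)] (erm s1 t1)) (pp).
  move=> a b /= /andP [a1 a2] /andP [b1 b2] /andP [eab _].
  rewrite /erm eab /= (negbTE a1) (negbTE a2) //.
apply/allP => y /(path_connect pp); exact: Hy.
Qed.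

Lemma K2 s1 t1 s2 t2 : e s1 t1 -> e s2 t2 -> (s2, t2) != (s1, t1) ->
  (s2, t2) != (t1, s1) ->
  (forall x, sig (s1, t1) x -> sig (s2, t2) x = sig (s2, t2) t1) \/
  (forall x, ~~ sig (s1, t1) x -> sig (s2, t2) x = sig (s2, t2) s1).
Proof.
move=> e1 e2 n1 n2.
have e12 : erm s1 t1 s2 t2.
  rewrite /erm e2 /=; apply/negP => /orP [] /andP [/eqP a /eqP b];
  [move: n1 | move: n2]; by rewrite a b eqxx.
have st2 : sig (s1, t1) s2 = sig (s1, t1) t2.
  rewrite /sig /=; apply: (@conn_eq _ t2); first exact: erm_sym.
  by rewrite csym; apply: connect1.
have cs : forall u x, connect (erm s2 t2) u x -> sig (s2, t2) x = sig (s2, t2) u.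
  move=> u x ux; rewrite /sig /=; apply: conn_eq ux; exact: erm_sym.
case H: (sig (s1, t1) s2).
- right => x nx; apply: cs; apply: (@avoidK s1 t1).
    by rewrite (side _ e1).
  move=> y sy; apply/andP; split; apply/eqP => ye; move: sy; rewrite ye (side _ e1).
    by move: H; rewrite /sig /= => ->.
  by move: H; rewrite st2 /sig /= => ->.
- left => x nx; apply: cs; apply: (@avoidK s1 t1); first exact: nx.
  move=> y sy; apply/andP; split; apply/eqP => ye; move: sy; rewrite ye.
    by move: H; rewrite /sig /= => ->.
  by move: H; rewrite st2 /sig /= => ->.
Qed.

Section Four.
Variables a b c d : N.

Definition acbd st :=
  (sig st a == sig st c) && (sig st b == sig st d) && (sig st a != sig st b).
Definition adbc st :=
  (sig st a == sig st d) && (sig st b == sig st c) && (sig st a != sig st b).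

Lemma compat s1 t1 s2 t2 : e s1 t1 -> e s2 t2 ->
  acbd (s1, t1) -> adbc (s2, t2) -> False.
Proof.
move=> e1 e2; rewrite /acbd /adbc.
case: (eqVneq (s2, t2) (s1, t1)) => [[-> ->]|n1].
  by move: (sig (s1, t1) a) (sig (s1, t1) b) (sig (s1, t1) c) (sig (s1, t1) d); do 4! case.
case: (eqVneq (s2, t2) (t1, s1)) => [[-> ->]|n2].
  rewrite !(sig_swap _ e1).
  by move: (sig (s1, t1) a) (sig (s1, t1) b) (sig (s1, t1) c) (sig (s1, t1) d); do 4! case.
move=> /andP [/andP [/eqP ac /eqP bd] ab] /andP [/andP [/eqP ad /eqP bc] ab2].
case: (K2 e1 e2 n1 n2) => H.
- case A1 : (sig (s1, t1) a).
  + have Ha := H a A1; have Hc := H c (etrans (Logic.eq_sym ac) A1).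
    by move: ab2; rewrite bc Ha Hc eqxx.
  + have B1 : sig (s1, t1) b by move: ab; rewrite A1; case: (sig _ b).
    have Hb := H b B1; have Hd := H d (etrans (Logic.eq_sym bd) B1).
    by move: ab2; rewrite ad Hd Hb eqxx.
- case A1 : (sig (s1, t1) a).
  + have B1 : ~~ sig (s1, t1) b by move: ab; rewrite A1; case: (sig _ b).
    have Hb := H b B1; have Hd := H d (ltac:(by rewrite -bd)).
    by move: ab2; rewrite ad Hd Hb eqxx.
  + have Ha := H a (negbT A1); have Hc := H c (ltac:(by rewrite -ac A1)).
    by move: ab2; rewrite bc Ha Hc eqxx.
Qed.

Lemma fourD : D a b + D c d <= D a c + D b d \/ D a b + D c d <= D a d + D b c.
Proof.
rewrite /D -!big_split /=.
case: (boolP [exists st : N * N, e st.1 st.2 && acbd st]) => [/existsP [[s1 t1] /andP [e1 h1]]|hn].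
- right; apply: ler_sum => [[s t]] /= est.
  have na : ~~ adbc (s, t) by apply/negP => h2; apply: (compat e1 est h1 h2).
  have [w0 _] := wpos est; move: na; rewrite /adbc.
  by move: (sig (s, t) a) (sig (s, t) b) (sig (s, t) c) (sig (s, t) d); do 4! case => //=; lra.
- left; apply: ler_sum => [[s t]] /= est.
  have na : ~~ acbd (s, t).
    by apply/negP => h1; move/existsP: hn; apply; exists (s, t); rewrite est h1.
  have [w0 _] := wpos est; move: na; rewrite /acbd.
  by move: (sig (s, t) a) (sig (s, t) b) (sig (s, t) c) (sig (s, t) d); do 4! case => //=; lra.
Qed.

End Four.

End Tree.


Section Model.
Variable R : realType.

Definition model (V : finType) (E : rel V) : Prop :=
  exists (d : V -> V -> R) (I : R -> Prop),
    (forall a b x, I a -> I b -> a <= x -> x <= b -> I x) /\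
    (forall u v, u != v -> (E u v <-> I (d u v))) /\
    (forall u v, d u v = d v u) /\
    (forall a b c dd, d a b + d c dd <= d a c + d b dd \/
                      d a b + d c dd <= d a dd + d b c).

Lemma pcg_model (V : finType) (E : rel V) : is_PCG R E -> model E.
Proof.
case=> N [e [w [f [I [[esym [eirr [econn eacyc]]] [wpos [finj [_ [[_ Iconv] HE]]]]]]]]].
exists (fun u v => D e w (f u) (f v) / 2), I; split; first exact: Iconv.
split.
  move=> u v uv; rewrite HE; split.
    case=> _ [p [pp pu pl pI]].
    have := walk_D esym eirr eacyc wpos pp pu; rewrite pl => <-.
    by rewrite (_ : 2 * _ / 2 = walk_weight w (f u) p) //; lra.
  move=> hI; split => //.
  have /connectP [p pp lp] := econn (f u) (f v).
  case: (shortenP pp) lp => q qp qu _ lq.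
  exists q; split => //.
  have := walk_D esym eirr eacyc wpos qp qu; rewrite -lq => H.
  by move: hI; rewrite -H (_ : 2 * _ / 2 = walk_weight w (f u) q) //; lra.
split.
  move=> u v; congr (_ / 2); apply: eq_bigr => st _; by rewrite eq_sym.
move=> a b c dd.
case: (fourD esym eirr econn eacyc wpos (f a) (f b) (f c) (f dd)) => H; [left|right]; lra.
Qed.

End Model.


Definition Hbar := compl_graph H_edge.

Lemma Hbar_cross (u v : HV) : u.1 != v.1 -> Hbar u v.
Proof.
move=> uv; rewrite /Hbar /compl_graph /H_edge (negbTE uv) /= andbT.
by apply: contra uv => /eqP ->.
Qed.

Lemma Hbar_same (u v : HV) : u.1 = v.1 -> u.2.1 = v.2.1 -> u != v -> Hbar u v.
Proof. by move=> h1 h2 uv; rewrite /Hbar /compl_graph /H_edge uv /= h1 h2 !eqxx. Qed.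

Lemma exists_min (R : realType) (T : finType) (t0 : T) (F : T -> R) :
  exists x, forall y, F x <= F y.
Proof.
have : forall s : seq T, exists x, forall y, y \in t0 :: s -> F x <= F y.
  elim=> [|a s [x Hx]].
    by exists t0 => y; rewrite inE => /eqP ->.
  case: (leP (F x) (F a)) => H.
    exists x => y; rewrite !inE => /orP [/eqP ->|/orP [/eqP ->|ys]] //.
      by apply: Hx; rewrite inE eqxx.
    by apply: Hx; rewrite inE ys orbT.
  exists a => y; rewrite !inE => /orP [/eqP ->|/orP [/eqP ->|ys]] //.
    apply: ltW; apply: lt_le_trans H _; by apply: Hx; rewrite inE eqxx.
  apply: ltW; apply: lt_le_trans H _; by apply: Hx; rewrite inE ys orbT.
move=> /(_ (enum T)) [x Hx]; exists x => y; apply: Hx.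
by rewrite inE mem_enum orbT.
Qed.

Section Comb.
Variable R : realType.
Variable E : rel HV.
Variable d : HV -> HV -> R.
Variable I : R -> Prop.
Hypothesis Iconv : forall a b x, I a -> I b -> a <= x -> x <= b -> I x.
Hypothesis EI : forall u v, u != v -> (E u v <-> I (d u v)).
Hypothesis dsym : forall u v, d u v = d v u.
Hypothesis four : forall a b c dd, d a b + d c dd <= d a c + d b dd \/
                      d a b + d c dd <= d a dd + d b c.
Hypothesis sup : forall u v, Hbar u v -> E u v.

Definition abv x := forall z, I z -> z < x.
Definition blw x := forall z, I z -> x < z.

Lemma out_split x : ~ I x -> abv x \/ blw x.
Proof.
move=> nI; apply: NNPP => H; apply: nI.
have /not_all_ex_not [z1 H1] : ~ abv x by move=> h; apply: H; left.
have /not_all_ex_not [z2 H2] : ~ blw x by move=> h; apply: H; right.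
have [I1 n1] := imply_to_and _ _ H1; have [I2 n2] := imply_to_and _ _ H2.
apply: (Iconv I2 I1).
  by rewrite leNgt; apply/negP.
by rewrite leNgt; apply/negP.
Qed.

Lemma inI u v : Hbar u v -> I (d u v).
Proof.
move=> h; have uv : u != v by move: h; rewrite /Hbar /compl_graph => /andP [].
by apply/(EI uv)/sup.
Qed.

Lemma far_unique (u1 v1 u2 v2 : HV) : u1.1 = v1.1 -> u2.1 = v2.1 ->
  u1.1 != u2.1 -> abv (d u1 v1) -> abv (d u2 v2) -> False.
Proof.
move=> h1 h2 h12 a1 a2.
have c1 := inI (Hbar_cross h12).
have c2 : I (d u1 v2) by apply: inI; apply: Hbar_cross; rewrite -h2.
have c3 : I (d v1 u2) by apply: inI; apply: Hbar_cross; rewrite -h1.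
have c4 : I (d v1 v2) by apply: inI; apply: Hbar_cross; rewrite -h1 -h2.
have := a1 _ c1; have := a1 _ c2; have := a1 _ c3; have := a1 _ c4.
have := a2 _ c1; have := a2 _ c2; have := a2 _ c3; have := a2 _ c4.
case: (four u1 v1 u2 v2) => H; lra.
Qed.

Definition freeq (q : 'I_3) := forall u v : HV, u.1 = q -> v.1 = q -> u != v ->
  ~~ E u v -> ~ abv (d u v).

Lemma notfree_ex p : ~ freeq p -> exists u v, [/\ u.1 = p, v.1 = p & abv (d u v)].
Proof.
move=> np; apply: NNPP => H; apply: np => u v hu hv _ _ a.
by apply: H; exists u, v.
Qed.

Lemma notfree_unique p q : ~ freeq p -> ~ freeq q -> p != q -> False.
Proof.
move=> /notfree_ex [u1 [v1 [e1 f1 a1]]] /notfree_ex [u2 [v2 [e2 f2 a2]]] pq.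
apply: (far_unique (u1 := u1) (v1 := v1) (u2 := u2) (v2 := v2)) a1 a2.
- by rewrite e1 f1.
- by rewrite e2 f2.
- by rewrite e1 e2.
Qed.


Section Near.
Variable q : 'I_3.
Hypothesis fq : freeq q.

Definition vt (s : 'I_2 * 'I_4) : HV := (q, s).
Definition sA (k : 'I_4) : 'I_2 * 'I_4 := (ord0, k).
Definition sB (k : 'I_4) : 'I_2 * 'I_4 := (ord_max, k).
Definition Nset := [set kl : 'I_4 * 'I_4 | ~~ E (vt (sA kl.1)) (vt (sB kl.2))].

Lemma vt_neq s s' : s != s' -> vt s != vt s'.
Proof. by apply: contra => /eqP [->]. Qed.

Lemma blw_of s s' : s != s' -> ~~ E (vt s) (vt s') -> blw (d (vt s) (vt s')).
Proof.
move=> ss nE; have vv := vt_neq ss.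
have nI : ~ I (d (vt s) (vt s')) by move/(EI vv); apply/negP.
case: (out_split nI) => // ab; exfalso; exact: (fq (u := vt s) (v := vt s') erefl erefl vv nE ab).
Qed.

Lemma AB_neq k l : sA k != sB l.
Proof. by rewrite /sA /sB xpair_eqE. Qed.

Lemma near_bound : (#|Nset| <= 7)%N.
Proof.
pose r := vt (ord0, ord0).
pose h x := d r x.
have [x0 Hx0] := exists_min (ord0, ord0) (fun s => h (vt s)).
have star : forall x y z, y != z -> y.1 = z.1 -> blw (d (vt x) (vt y)) ->
    blw (d (vt x) (vt z)) -> h (vt y) <= h (vt x) -> h (vt z) <= h (vt x) -> False.
  move=> x y z yz y1 bxy bxz hy hz.
  have Iyz : I (d (vt y) (vt z)) by apply: inI; apply: Hbar_same => //; exact: vt_neq.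
  have := bxy _ Iyz; have := bxz _ Iyz; move: hy hz; rewrite /h.
  have := dsym (vt x) r; have := dsym (vt y) r; have := dsym (vt z) r.
  have := dsym (vt x) (vt y); have := dsym (vt x) (vt z).
  case: (four (vt y) (vt z) (vt x) r) => H; lra.
pose c (kl : 'I_4 * 'I_4) := if sA kl.1 == x0 then sB kl.2 else
   if sB kl.2 == x0 then sA kl.1 else
   if h (vt (sB kl.2)) <= h (vt (sA kl.1)) then sA kl.1 else sB kl.2.
have cspec : forall kl, c kl != x0 /\
   ((c kl = sA kl.1 /\ h (vt (sB kl.2)) <= h (vt (sA kl.1))) \/
    (c kl = sB kl.2 /\ h (vt (sA kl.1)) <= h (vt (sB kl.2)))).
  move=> [k l]; rewrite /c /=.
  case: (eqVneq (sA k) x0) => [HA|nA].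
    rewrite -HA ?eqxx; split; first by rewrite eq_sym AB_neq.
    by right; split => //; rewrite HA; apply: Hx0.
  rewrite ?(negbTE nA).
  case: (eqVneq (sB l) x0) => [HB|nB].
    rewrite -HB ?eqxx; split; first by rewrite AB_neq.
    by left; split => //; rewrite HB; apply: Hx0.
  rewrite ?(negbTE nB).
  case: leP => H.
    by split; [exact: nA | left].
  by split; [exact: nB | right; split => //; exact: ltW].
have inj : {in Nset &, injective c}.
  move=> [k l] [k' l']; rewrite !inE /= => n1 n2.
  have b1 := blw_of (AB_neq k l) n1; have b2 := blw_of (AB_neq k' l') n2.
  have [_ s1] := cspec (k, l); have [_ s2] := cspec (k', l').
  move: s1 s2 => /= [] [-> h1] [] [-> h2] E12.
  - move: E12 => [kk]; subst k'; case: (eqVneq l l') => [-> //|ll].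
    exfalso; apply: (star (sA k) (sB l) (sB l')) => //.
  - by move: (AB_neq k l'); rewrite E12 eqxx.
  - by move: (AB_neq k' l); rewrite E12 eqxx.
  - move: E12 => [ll]; subst l'; case: (eqVneq k k') => [-> //|kk].
    exfalso; apply: (star (sB l) (sA k) (sA k')) => //.
    + by move=> z Iz; rewrite dsym; apply: b1.
    + by move=> z Iz; rewrite dsym; apply: b2.
rewrite -(card_in_imset inj).
have sub : c @: Nset \subset [set~ x0].
  apply/subsetP => y /imsetP [kl _ ->]; rewrite !inE.
  by have [-> _] := cspec kl.
apply: leq_trans (subset_leq_card sub) _.
by rewrite cardsC1 card_prod !card_ord.
Qed.

End Near.
End Comb.



Local Close Scope ring_scope.

Theorem theorem12 (R : realType) : ~ is_k_AND_PCG R 2 (compl_graph H_edge).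
Proof.
case=> Es [hP hE].
pose i0 : 'I_2 := ord0. pose i1 : 'I_2 := ord_max.
have sup : forall i u v, Hbar u v -> Es i u v by move=> i u v h; exact: (proj1 (hE u v) h).
have [d0 [I0 [c0 [e0 [s0 f0]]]]] := pcg_model (hP i0).
have [d1 [I1 [c1 [e1 [s1 f1]]]]] := pcg_model (hP i1).
have nu0 := notfree_unique e0 f0 (sup i0).
have nu1 := notfree_unique e1 f1 (sup i1).
have [q [fq0 fq1]] : exists q, freeq (Es i0) d0 I0 q /\ freeq (Es i1) d1 I1 q.
  apply: NNPP => H.
  have Hq : forall q, ~ freeq (Es i0) d0 I0 q \/ ~ freeq (Es i1) d1 I1 q.
    move=> q; apply: NNPP => H'; apply: H; exists q; split; apply: NNPP => ?;
    apply: H'; [left|right] => //.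
  pose q0 : 'I_3 := @Ordinal 3 0 isT.
  pose q1 : 'I_3 := @Ordinal 3 1 isT.
  pose q2 : 'I_3 := @Ordinal 3 2 isT.
  case: (Hq q0) => a0; case: (Hq q1) => a1; case: (Hq q2) => a2;
  solve [ exact: (nu0 _ _ a0 a1 isT) | exact: (nu0 _ _ a0 a2 isT)
        | exact: (nu0 _ _ a1 a2 isT) | exact: (nu1 _ _ a0 a1 isT)
        | exact: (nu1 _ _ a0 a2 isT) | exact: (nu1 _ _ a1 a2 isT) ].
have b0 := near_bound c0 e0 s0 f0 (sup i0) fq0.
have b1 := near_bound c1 e1 s1 f1 (sup i1) fq1.
have cov : [set: 'I_4 * 'I_4] \subset Nset (Es i0) q :|: Nset (Es i1) q.
  apply/subsetP => [[k l]] _; rewrite !inE /=.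
  have nH : ~~ Hbar (vt q (sA k)) (vt q (sB l)).
    by rewrite /Hbar /compl_graph /H_edge /= eqxx /= andbF.
  have : ~ (forall i, Es i (vt q (sA k)) (vt q (sB l))).
    by move/(proj2 (hE _ _)); apply/negP.
  move=> H; apply: NNPP => H'; apply: H => i.
  case: i => [[|[|//]]] Hi.
  - apply: NNPP => h; apply: H'; apply/orP; left.
    have -> : i0 = Ordinal Hi by apply: val_inj.
    by apply/negP.
  - apply: NNPP => h; apply: H'; apply/orP; right.
    have -> : i1 = Ordinal Hi by apply: val_inj.
    by apply/negP.
have := subset_leq_card cov; rewrite cardsT card_prod !card_ord => H.
have := leq_trans H (leq_card_setU _ _).
move=> H2; have := leq_trans H2 (leq_add b0 b1); by [].
Qed.
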